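(* Let $P$ be a thin orthogonal polygon. If $P$ has no holes, then the dual graph $D$ of the pixelation of $P$ is a tree.
   Context: An orthogonal polygon $P$ is a closed connected region of the plane whose boundary consists of finitely many axis-parallel segments; a hole is a bounded connected component of the complement of $P$. The pixelation of $P$ is the partition of $P$ into rectangles obtained by shooting, from every reflex vertex of $P$, a horizontal and a vertical ray into the interior of $P$ until it hits the boundary of $P$; the resulting rectangles are called pixels, and their corners are pixel-corners. The dual graph $D$ of $P$ has one vertex per pixel, two pixels being adjacent iff they share a side. $P$ is thin if every pixel-corner lies on the boundary of $P$. *)

(* Defs.v *)
From HB Require Import structures.
From mathcomp Require Import all_boot all_order all_algebra.
Set Implicit Arguments. Unset Strict Implicit. Unset Printing Implicit Defensive.
Import Order.TTheory GRing.Theory Num.Theory.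
Local Open Scope ring_scope.

(* A cell (i,j) is the closed unit square [i,i+1] x [j,j+1].
   A region S is the union of the closed cells (i,j) with S i j = true.
   Grid point (x,y) is the point with coordinates x,y. *)
Definition cell := (int * int)%type.
Definition region := int -> int -> bool.

Definition inP (S : region) (c : cell) : bool := S c.1 c.2.

Definition around (x y : int) : seq cell :=
  [:: (x - 1, y - 1); (x, y - 1); (x - 1, y); (x, y)].

Definition edge_adj (c d : cell) : bool :=
  ((c.1 == d.1) && ((d.2 == c.2 + 1) || (c.2 == d.2 + 1))) ||
  ((c.2 == d.2) && ((d.1 == c.1 + 1) || (c.1 == d.1 + 1))).

Inductive gwalk (R : cell -> cell -> Prop) : cell -> cell -> Prop :=
| gw_refl c : gwalk R c c
| gw_step c d e : R c d -> gwalk R d e -> gwalk R c e.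

Definition bounded (S : region) : Prop :=
  exists N : nat, forall i j, S i j -> (absz i < N)%N /\ (absz j < N)%N.

(* a point where P touches itself at a corner only (excluded for polygons) *)
Definition pinch (S : region) (x y : int) : bool :=
  (S (x - 1) (y - 1) && S x y && ~~ S x (y - 1) && ~~ S (x - 1) y) ||
  (S x (y - 1) && S (x - 1) y && ~~ S (x - 1) (y - 1) && ~~ S x y).

Definition cells_connected (S : region) : Prop :=
  forall c d, inP S c -> inP S d ->
    gwalk (fun a b => [&& inP S a, inP S b & edge_adj a b]) c d.

Definition orthogonal_polygon (S : region) : Prop :=
  [/\ bounded S, exists c, inP S c, cells_connected S &
      forall x y, ~~ pinch S x y].

(* every connected component of the complement of P is unbounded *)
Definition no_holes (S : region) : Prop :=
  forall c, ~~ inP S c -> forall M : nat, exists d,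
    ((M < absz d.1)%N \/ (M < absz d.2)%N) /\
    gwalk (fun a b => [&& ~~ inP S a, ~~ inP S b & edge_adj a b]) c d.

Definition on_boundary (S : region) (x y : int) : bool :=
  has (inP S) (around x y) && ~~ all (inP S) (around x y).

Definition reflex (S : region) (x y : int) : bool :=
  count (inP S) (around x y) == 3%N.

(* horizontal unit segment [i,i+1] x {y} lies in the interior of P *)
Definition interior_h (S : region) (i y : int) : bool := S i (y - 1) && S i y.
(* vertical unit segment {x} x [j,j+1] lies in the interior of P *)
Definition interior_v (S : region) (x j : int) : bool := S (x - 1) j && S x j.

(* the horizontal unit segment [i,i+1] x {y} is covered by the horizontal
   ray shot from some reflex vertex (x,y) (westwards if the missing cell
   is east of the vertex, eastwards otherwise) before it hits the boundary *)
Definition hray (S : region) (i y : int) : Prop :=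
  (exists x, [/\ reflex S x y, ~~ S x (y - 1) || ~~ S x y, i < x &
       forall k, i <= k < x -> interior_h S k y]) \/
  (exists x, [/\ reflex S x y, ~~ S (x - 1) (y - 1) || ~~ S (x - 1) y, x <= i &
       forall k, x <= k <= i -> interior_h S k y]).

(* the vertical unit segment {x} x [j,j+1] is covered by a vertical ray *)
Definition vray (S : region) (x j : int) : Prop :=
  (exists y, [/\ reflex S x y, ~~ S (x - 1) y || ~~ S x y, j < y &
       forall k, j <= k < y -> interior_v S x k]) \/
  (exists y, [/\ reflex S x y, ~~ S (x - 1) (y - 1) || ~~ S x (y - 1), y <= j &
       forall k, y <= k <= j -> interior_v S x k]).

(* two cells of P share a side that is not cut by a ray *)
Definition join (S : region) (c d : cell) : Prop :=
  [/\ inP S c, inP S d &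
    [\/ [/\ c.1 = d.1, d.2 = c.2 + 1 & ~ hray S c.1 d.2],
        [/\ c.1 = d.1, c.2 = d.2 + 1 & ~ hray S c.1 c.2],
        [/\ c.2 = d.2, d.1 = c.1 + 1 & ~ vray S d.1 c.2] |
        [/\ c.2 = d.2, c.1 = d.1 + 1 & ~ vray S c.1 c.2]]].

(* c and d are cells of P lying in the same pixel *)
Definition same_pixel (S : region) (c d : cell) : Prop :=
  inP S c /\ gwalk (join S) c d.

(* the pixels containing c and d are distinct and share a side
   (dual-graph adjacency) *)
Definition pixel_adj (S : region) (c d : cell) : Prop :=
  ~ same_pixel S c d /\
  exists c' d', [/\ same_pixel S c c', same_pixel S d d' & edge_adj c' d'].

(* grid point (x,y) is a corner of the pixel containing c:
   exactly one of the four incident cells lies in that (rectangular) pixel *)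
Definition pixel_corner (S : region) (c : cell) (x y : int) : Prop :=
  exists2 d, d \in around x y &
    same_pixel S c d /\
    forall d', d' \in around x y -> d' != d -> ~ same_pixel S c d'.

Definition thin (S : region) : Prop :=
  forall c x y, inP S c -> pixel_corner S c x y -> on_boundary S x y.

Definition dual_connected (S : region) : Prop :=
  forall c d, inP S c -> inP S d ->
    gwalk (fun a b => same_pixel S a b \/ pixel_adj S a b) c d.

Definition dual_acyclic (S : region) : Prop :=
  ~ exists s : seq cell,
      [/\ (3 <= size s)%N,
          forall i j, (i < size s)%N -> (j < size s)%N -> i <> j ->
            ~ same_pixel S (nth (0, 0) s i) (nth (0, 0) s j) &
          forall i, (i < size s)%N ->
            pixel_adj S (nth (0, 0) s i) (nth (0, 0) s (i.+1 %% size s))].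

Definition dual_is_tree (S : region) : Prop :=
  dual_connected S /\ dual_acyclic S.

(* Main.v *)
Require Import Defs.
From mathcomp Require Import all_boot all_order all_algebra.
From mathcomp Require Import zify.
From Stdlib Require Import Classical.
Import Order.TTheory GRing.Theory Num.Theory.
Set Implicit Arguments. Unset Strict Implicit. Unset Printing Implicit Defensive.
Local Open Scope ring_scope.


Ltac bsplit := repeat match goal with
 | |- context [(?a == ?b)] => case: (a =P b) => ?
 | |- context [(?a <= ?b)%R] => case: (lerP a b) => ?
 end.

Definition hseg (e f : cell) : option (int * int) :=
  if (e.1 == f.1) && (f.2 == e.2 + 1) then Some (e.1, f.2)
  else if (e.1 == f.1) && (e.2 == f.2 + 1) then Some (e.1, e.2) else None.
Definition vseg (e f : cell) : option (int * int) :=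
  if (e.2 == f.2) && (f.1 == e.1 + 1) then Some (f.1, e.2)
  else if (e.2 == f.2) && (e.1 == f.1 + 1) then Some (e.1, e.2) else None.
Definition hcr (qx qy : int) (e f : cell) : bool := hseg e f == Some (qx, qy).
Definition vcr (qx qy : int) (e f : cell) : bool := vseg e f == Some (qx, qy).
Definition hx (qx qy : int) (e f : cell) : bool :=
  if hseg e f is Some (i, y) then (qx <= i) && (y == qy) else false.
Definition Rq (qx qy : int) (c : cell) : bool := (c.2 == qy) && (qx <= c.1).
Definition farp (N : nat) (qx qy : int) : bool := (N <= absz qx)%N || (N <= absz qy)%N.
Definition Fq (N : nat) (qx qy : int) (c : cell) : bool := (qx <= - (N%:Z)) && (qy <= c.2).

Lemma eqSome (T : eqType) (a b : T) : (Some a == Some b) = (a == b).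
Proof. by apply/eqP/eqP => [[]|->]. Qed.

Lemma neq_s1 (x : int) : (x == x + 1) = false.
Proof. lia. Qed.
Lemma neq_s2 (x : int) : (x + 1 == x) = false.
Proof. lia. Qed.

Lemma edge_shape e f : edge_adj e f -> exists i j,
  [\/ e = (i,j) /\ f = (i,j+1), e = (i,j+1) /\ f = (i,j),
      e = (i,j) /\ f = (i+1,j) | e = (i+1,j) /\ f = (i,j)].
Proof.
case: e f => [e1 e2] [f1 f2]; rewrite /edge_adj /=.
case/orP => /andP [/eqP <- /orP [/eqP ->|/eqP ->]].
- by exists e1, e2; constructor 1.
- by exists e1, f2; constructor 2.
- by exists e1, e2; constructor 3.
- by exists f1, e2; constructor 4.
Qed.

Lemma seg_up i j : (hseg (i,j) (i,j+1) = Some (i, j+1)) * (vseg (i,j) (i,j+1) = None).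
Proof. rewrite /hseg /vseg /=; split; bsplit => //=; try lia; congr Some; congr pair; lia. Qed.
Lemma seg_down i j : (hseg (i,j+1) (i,j) = Some (i, j+1)) * (vseg (i,j+1) (i,j) = None).
Proof. rewrite /hseg /vseg /=; split; bsplit => //=; try lia; congr Some; congr pair; lia. Qed.
Lemma seg_right i j : (hseg (i,j) (i+1,j) = None) * (vseg (i,j) (i+1,j) = Some (i+1, j)).
Proof. rewrite /hseg /vseg /=; split; bsplit => //=; try lia; congr Some; congr pair; lia. Qed.
Lemma seg_left i j : (hseg (i+1,j) (i,j) = None) * (vseg (i+1,j) (i,j) = Some (i+1, j)).
Proof. rewrite /hseg /vseg /=; split; bsplit => //=; try lia; congr Some; congr pair; lia. Qed.

Lemma idW1 qx qy e f : hx qx qy e f (+) hx (qx+1) qy e f = hcr qx qy e f.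
Proof.
rewrite /hx /hcr; case: (hseg e f) => [[i y]|] //=.
rewrite /= ?eqSome ?xpair_eqE. bsplit => //=; lia.
Qed.

Lemma idW2 qx qy e f : edge_adj e f ->
  hx qx qy e f (+) hx qx (qy+1) e f (+) vcr qx qy e f = Rq qx qy e (+) Rq qx qy f.
Proof.
case/edge_shape => i [j [[-> ->]|[-> ->]|[-> ->]|[-> ->]]]; rewrite /hx /vcr /Rq.
- case: (seg_up i j) => -> -> /=. bsplit => //=; lia.
- case: (seg_down i j) => -> -> /=. bsplit => //=; lia.
- case: (seg_right i j) => -> -> /=. rewrite /= ?eqSome ?xpair_eqE. bsplit => //=; lia.
- case: (seg_left i j) => -> -> /=. rewrite /= ?eqSome ?xpair_eqE. bsplit => //=; lia.
Qed.

Definition inb (N : nat) (c : cell) : bool := (absz c.1 < N)%N && (absz c.2 < N)%N.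

Lemma idF N qx qy e f : edge_adj e f -> inb N e -> inb N f -> farp N qx qy ->
  hx qx qy e f = Fq N qx qy e (+) Fq N qx qy f.
Proof.
case/edge_shape => i [j [[-> ->]|[-> ->]|[-> ->]|[-> ->]]]; rewrite /hx /Fq /inb /farp /=.
- case: (seg_up i j) => -> _ /=. move=> /andP[H1 H2] /andP[H3 H4] H5. bsplit => //=; lia.
- case: (seg_down i j) => -> _ /=. move=> /andP[H1 H2] /andP[H3 H4] H5. bsplit => //=; lia.
- case: (seg_right i j) => -> _ /=. by rewrite addbb.
- case: (seg_left i j) => -> _ /=. by rewrite addbb.
Qed.

Definition Inv (N : nat) (Hb Vb : int -> int -> Prop) (hp vp : int -> int -> bool)
  (s e : cell) : Prop :=
  exists W : int -> int -> bool,
  [/\ forall qx qy, Hb qx qy -> W qx qy (+) W (qx+1) qy = hp qx qy,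
      forall qx qy, Vb qx qy -> W qx qy (+) W qx (qy+1) = vp qx qy (+) Rq qx qy s (+) Rq qx qy e &
      forall qx qy, farp N qx qy -> W qx qy = Fq N qx qy s (+) Fq N qx qy e].

Lemma Inv_step N Hb Vb hp vp c d e : edge_adj c d -> inb N c -> inb N d ->
  Inv N Hb Vb hp vp d e ->
  Inv N Hb Vb (fun x y => hp x y (+) hcr x y c d) (fun x y => vp x y (+) vcr x y c d) c e.
Proof.
move=> Ecd Ic Id [W [H1 H2 H3]].
exists (fun x y => W x y (+) hx x y c d); split.
- move=> x y Hxy; rewrite -idW1 -(H1 _ _ Hxy).
  by move: (W x y) (W (x+1) y) (hx x y c d) (hx (x+1) y c d); do 4! case.
- move=> x y Hxy. have := idW2 x y Ecd. have := H2 _ _ Hxy.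
  move: (W x y) (W x (y+1)) (hx x y c d) (hx x (y+1) c d) (vcr x y c d) (vp x y)
        (Rq x y c) (Rq x y d) (Rq x y e).
  by do 9! case.
- move=> x y Fxy; rewrite (H3 _ _ Fxy) (idF Ecd Ic Id Fxy).
  by move: (Fq N x y c) (Fq N x y d) (Fq N x y e); do 3! case.
Qed.

Lemma Inv_weaken N Hb Vb hp vp hp' vp' s e :
  (forall x y, Hb x y -> hp x y = hp' x y) -> (forall x y, Vb x y -> vp x y = vp' x y) ->
  Inv N Hb Vb hp vp s e -> Inv N Hb Vb hp' vp' s e.
Proof.
move=> Eh Ev [W [H1 H2 H3]]; exists W; split => //.
- by move=> x y H; rewrite -Eh // H1.
- by move=> x y H; rewrite -Ev // H2.
Qed.

Lemma Inv_walk N Hb Vb (A : cell -> cell -> Prop) :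
  (forall c d, A c d -> [/\ edge_adj c d, inb N c, inb N d,
       forall x y, Hb x y -> ~~ hcr x y c d & forall x y, Vb x y -> ~~ vcr x y c d]) ->
  forall c e, gwalk A c e -> Inv N Hb Vb (fun _ _ => false) (fun _ _ => false) c e.
Proof.
move=> HA c e; elim => {c e}.
- move=> c; exists (fun _ _ => false); split => // x y _; [by case: (Rq x y c) | by rewrite addbb].
- move=> c d e Acd _ IH.
  case: (HA _ _ Acd) => E Ic Id Nh Nv.
  apply: (Inv_weaken _ _ (Inv_step E Ic Id IH)).
  + by move=> x y /Nh /negbTE ->.
  + by move=> x y /Nv /negbTE ->.
Qed.

Definition bnd (S : region) (N : nat) := forall i j, S i j -> (absz i < N)%N /\ (absz j < N)%N.

Section Zsec.
Variables (S : region) (N : nat) (W : int -> int -> bool).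
Hypothesis HN : bnd S N.
Hypothesis Hh : forall x y, ~~ S x (y-1) || ~~ S x y -> W x y = W (x+1) y.
Hypothesis Hv : forall x y, ~~ S (x-1) y || ~~ S x y -> W x y = W x (y+1).
Hypothesis Hf : forall x y, farp N x y -> W x y = false.

Lemma corner_eq i j : ~~ S i j ->
  [/\ W (i+1) j = W i j, W i (j+1) = W i j & W (i+1) (j+1) = W i j].
Proof.
move=> nS.
have h1 : W i j = W (i+1) j by apply: Hh; rewrite nS orbT.
have h2 : W i j = W i (j+1) by apply: Hv; rewrite nS orbT.
have h3 : W i (j+1) = W (i+1) (j+1) by apply: Hh; rewrite addrK nS.
by split; rewrite -?h3 -?h2 -?h1.
Qed.

Lemma cwalk_eq c d :
  gwalk (fun a b => [&& ~~ inP S a, ~~ inP S b & edge_adj a b]) c d -> W c.1 c.2 = W d.1 d.2.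
Proof.
elim => // {c d} c d e /and3P [nc nd E] _ <-.
case/edge_shape: E nc nd => i [j [[-> ->]|[-> ->]|[-> ->]|[-> ->]]] /= nc nd.
- by case: (corner_eq nc).
- by case: (corner_eq nd).
- by case: (corner_eq nc).
- by case: (corner_eq nd).
Qed.

Lemma Zlem : no_holes S -> forall i j, ~~ S i j ->
  [/\ W i j = false, W (i+1) j = false, W i (j+1) = false & W (i+1) (j+1) = false].
Proof.
move=> NH i j nS.
have W0 : W i j = false.
  have [d [Hd Hw]] := NH (i, j) nS N.
  rewrite (cwalk_eq Hw); apply: Hf; rewrite /farp.
  by case: Hd => /ltnW ->; rewrite ?orbT.
by case: (corner_eq nS) => -> -> ->.
Qed.
End Zsec.

Lemma line_contra (g : int -> bool) a b k0 : a <= k0 < b -> g a = false -> g b = false ->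
  (forall k, a <= k < b -> g k (+) g (k+1) = (k == k0)) -> False.
Proof.
move=> /andP [H1 H2] ga gb Hs.
have key : forall t : nat, a + t%:Z <= b -> g (a + t%:Z) = (k0 < a + t%:Z).
  elim => [|t IH] Ht.
  - rewrite addr0 ga; apply/esym/negbTE; rewrite -leNgt; lia.
  - have e : a + t.+1%:Z = (a + t%:Z) + 1 by lia.
    have Ht' : a + t%:Z <= b by lia.
    have := Hs (a + t%:Z). rewrite IH // e.
    have -> : a <= a + t%:Z < b by lia.
    move=> /(_ isT) H.
    have : g (a + t%:Z + 1) = (k0 < a + t%:Z) (+) (a + t%:Z == k0).
      by rewrite -H; case: (k0 < _); case: (g _).
    move=> ->. bsplit => //=; lia.
have := key (absz (b - a)). have -> : a + (absz (b - a))%:Z = b by lia.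
by rewrite gb H2 => /(_ (lexx _)).
Qed.

Definition bordH (S : region) x y := ~~ S x (y-1) || ~~ S x y.
Definition bordV (S : region) x y := ~~ S (x-1) y || ~~ S x y.

Lemma xor_false a b : a (+) b = false -> a = b.
Proof. by case: a; case: b. Qed.

Section Contra.
Variables (S : region) (N : nat).
Hypothesis HN : bnd S N.
Hypothesis NH : no_holes S.

Lemma Contra_h a b y k0 hp vp s :
  a <= k0 < b -> (~~ S (a-1) (y-1) || ~~ S (a-1) y) -> (~~ S b (y-1) || ~~ S b y) ->
  Inv N (fun x y' => (y' = y /\ a <= x < b) \/ bordH S x y') (bordV S) hp vp s s ->
  (forall x, a <= x < b -> hp x y = (x == k0)) ->
  (forall x y', bordH S x y' -> hp x y' = false) ->
  (forall x y', bordV S x y' -> vp x y' = false) -> False.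
Proof.
move=> Hk Ea Eb [W [H1 H2 H3]] Hl Hbh Hbv.
have Hh : forall x y', ~~ S x (y'-1) || ~~ S x y' -> W x y' = W (x+1) y'.
  move=> x y' B; apply: xor_false; rewrite H1; last by right.
  by rewrite Hbh.
have Hv : forall x y', ~~ S (x-1) y' || ~~ S x y' -> W x y' = W x (y'+1).
  by move=> x y' B; apply: xor_false; rewrite H2 // Hbv // addbb.
have Hf : forall x y', farp N x y' -> W x y' = false.
  by move=> x y' F; rewrite H3 // addbb.
have Z := Zlem Hh Hv Hf NH.
apply: (@line_contra (fun k => W k y) a b k0) => //.
- case/orP: Ea => [/Z [_ _ _ h2]|/Z [_ h1 _ _]].
  + by move: h2; rewrite !subrK.
  + by move: h1; rewrite !subrK.
- case/orP: Eb => /Z [h1 _ h2 _].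
  + by move: h2; rewrite !subrK.
  + by [].
- by move=> k Hk'; rewrite H1 ?Hl //; left.
Qed.

Lemma Contra_v a b x k0 hp vp s :
  a <= k0 < b -> (~~ S (x-1) (a-1) || ~~ S x (a-1)) -> (~~ S (x-1) b || ~~ S x b) ->
  Inv N (bordH S) (fun x' y' => (x' = x /\ a <= y' < b) \/ bordV S x' y') hp vp s s ->
  (forall y, a <= y < b -> vp x y = (y == k0)) ->
  (forall x y', bordH S x y' -> hp x y' = false) ->
  (forall x y', bordV S x y' -> vp x y' = false) -> False.
Proof.
move=> Hk Ea Eb [W [H1 H2 H3]] Hl Hbh Hbv.
have Hh : forall x y', ~~ S x (y'-1) || ~~ S x y' -> W x y' = W (x+1) y'.
  by move=> x' y' B; apply: xor_false; rewrite H1 ?Hbh.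
have Hv : forall x y', ~~ S (x-1) y' || ~~ S x y' -> W x y' = W x (y'+1).
  move=> x' y' B; apply: xor_false; rewrite H2; last by right.
  by rewrite Hbv // addbb.
have Hf : forall x y', farp N x y' -> W x y' = false.
  by move=> x' y' F; rewrite H3 // addbb.
have Z := Zlem Hh Hv Hf NH.
apply: (@line_contra (fun k => W x k) a b k0) => //.
- case/orP: Ea => [/Z [_ _ _ h2]|/Z [_ _ h2 _]].
  + by move: h2; rewrite !subrK.
  + by move: h2; rewrite !subrK.
- case/orP: Eb => [/Z [_ h2 _ _]|/Z [h2 _ _ _]].
  + by move: h2; rewrite !subrK.
  + by [].
- move=> k Hk'; rewrite H2; last by left.
  by rewrite addbK Hl.
Qed.
End Contra.

Lemma hseg_cells c d x y : hseg c d = Some (x, y) ->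
  (c = (x, y-1) /\ d = (x, y)) \/ (c = (x, y) /\ d = (x, y-1)).
Proof.
case: c d => [c1 c2] [d1 d2]; rewrite /hseg /=.
case: ifP => [/andP [/eqP E1 /eqP E2] [<- <-]|_].
  by left; subst; split; congr pair; lia.
case: ifP => [/andP [/eqP E1 /eqP E2] [<- <-]|_ //].
by right; subst; split; congr pair; lia.
Qed.

Lemma vseg_cells c d x y : vseg c d = Some (x, y) ->
  (c = (x-1, y) /\ d = (x, y)) \/ (c = (x, y) /\ d = (x-1, y)).
Proof.
case: c d => [c1 c2] [d1 d2]; rewrite /vseg /=.
case: ifP => [/andP [/eqP E1 /eqP E2] [<- <-]|_].
  by left; subst; split; congr pair; lia.
case: ifP => [/andP [/eqP E1 /eqP E2] [<- <-]|_ //].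
by right; subst; split; congr pair; lia.
Qed.

Lemma hcr_inS S c d x y : inP S c -> inP S d -> hcr x y c d -> S x (y-1) && S x y.
Proof.
rewrite /hcr => Sc Sd /eqP /hseg_cells [[E1 E2]|[E1 E2]]; subst; by rewrite /inP /= in Sc Sd; rewrite Sc Sd.
Qed.

Lemma vcr_inS S c d x y : inP S c -> inP S d -> vcr x y c d -> S (x-1) y && S x y.
Proof.
rewrite /vcr => Sc Sd /eqP /vseg_cells [[E1 E2]|[E1 E2]]; subst; by rewrite /inP /= in Sc Sd; rewrite Sc Sd.
Qed.

Lemma find_last (P : nat -> bool) M : P 0%N -> ~~ P M ->
  exists t, [/\ (t < M)%N, forall u, (u <= t)%N -> P u & ~~ P t.+1].
Proof.
move=> P0 PM.
have ex : exists m, ~~ P m by exists M.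
case: (ex_minnP ex) => m Pm Hmin.
have m0 : (0 < m)%N by case: m Pm {Hmin} => //; rewrite P0.
exists m.-1; split.
- have := Hmin M PM; lia.
- move=> u Hu; apply/negPn/negP => /Hmin; lia.
- by rewrite prednK.
Qed.

Lemma hray_int S i y : hray S i y -> interior_h S i y.
Proof.
case => [[x [_ _ Hx H]]|[x [_ _ Hx H]]]; apply: H; lia.
Qed.

Lemma vray_int S x j : vray S x j -> interior_v S x j.
Proof.
case => [[y [_ _ Hy H]]|[y [_ _ Hy H]]]; apply: H; lia.
Qed.

Lemma hray_r S k y : hray S k y -> interior_h S (k+1) y -> hray S (k+1) y.
Proof.
case => [[x [R M Hx H]]|[x [R M Hx H]]] I.
- have [e|ne] := eqVneq (k+1) x.
  + by move: I M; rewrite /interior_h e => /andP [-> ->].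
  + left; exists x; split => //; first lia.
    move=> m Hm; apply: H; lia.
- right; exists x; split => //; first lia.
  move=> m Hm; have [e|ne] := eqVneq m (k+1); first by rewrite e.
  apply: H; lia.
Qed.

Lemma hray_l S k y : hray S k y -> interior_h S (k-1) y -> hray S (k-1) y.
Proof.
case => [[x [R M Hx H]]|[x [R M Hx H]]] I.
- left; exists x; split => //; first lia.
  move=> m Hm; have [e|ne] := eqVneq m (k-1); first by rewrite e.
  apply: H; lia.
- have [e|ne] := eqVneq x k.
  + by move: I M; rewrite /interior_h e => /andP [-> ->].
  + right; exists x; split => //; first lia.
    move=> m Hm; apply: H; lia.
Qed.

Lemma vray_u S x k : vray S x k -> interior_v S x (k+1) -> vray S x (k+1).
Proof.
case => [[y [R M Hy H]]|[y [R M Hy H]]] I.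
- have [e|ne] := eqVneq (k+1) y.
  + by move: I M; rewrite /interior_v e => /andP [-> ->].
  + left; exists y; split => //; first lia.
    move=> m Hm; apply: H; lia.
- right; exists y; split => //; first lia.
  move=> m Hm; have [e|ne] := eqVneq m (k+1); first by rewrite e.
  apply: H; lia.
Qed.

Lemma vray_d S x k : vray S x k -> interior_v S x (k-1) -> vray S x (k-1).
Proof.
case => [[y [R M Hy H]]|[y [R M Hy H]]] I.
- left; exists y; split => //; first lia.
  move=> m Hm; have [e|ne] := eqVneq m (k-1); first by rewrite e.
  apply: H; lia.
- have [e|ne] := eqVneq y k.
  + by move: I M; rewrite /interior_v e => /andP [-> ->].
  + right; exists y; split => //; first lia.
    move=> m Hm; apply: H; lia.
Qed.

Definition hchord (S : region) a b y := [/\ a < b, forall k, a <= k < b -> hray S k y,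
  ~~ S (a-1) (y-1) || ~~ S (a-1) y & ~~ S b (y-1) || ~~ S b y].
Definition vchord (S : region) a b x := [/\ a < b, forall k, a <= k < b -> vray S x k,
  ~~ S (x-1) (a-1) || ~~ S x (a-1) & ~~ S (x-1) b || ~~ S x b].

Lemma hchord_ex S N i y : bnd S N -> hray S i y -> exists a b, hchord S a b y /\ a <= i < b.
Proof.
move=> HN Hi.
have bI : forall x, interior_h S x y -> (absz x < N)%N.
  by move=> x /andP [_ /HN []].
have [t [_ Hr Hrn]] : exists t, [/\ (t < N + absz i)%N, forall u, (u <= t)%N -> (fun u => interior_h S (i + u%:Z) y) u & ~~ (fun u => interior_h S (i + u%:Z) y) t.+1].
  apply: (@find_last (fun u => interior_h S (i + u%:Z) y)); [by rewrite addr0; exact: hray_int | by apply/negP => /bI; lia].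
have [t' [_ Hl Hln]] : exists t, [/\ (t < N + absz i)%N, forall u, (u <= t)%N -> (fun u => interior_h S (i - u%:Z) y) u & ~~ (fun u => interior_h S (i - u%:Z) y) t.+1].
  apply: (@find_last (fun u => interior_h S (i - u%:Z) y)); [by rewrite subr0; exact: hray_int | by apply/negP => /bI; lia].
have hr : forall u, (u <= t)%N -> hray S (i + u%:Z) y.
  elim => [|u IH] Hu; first by rewrite addr0.
  have e : i + u.+1%:Z = i + u%:Z + 1 by lia.
  rewrite e; apply: hray_r; first by apply: IH; lia.
  by rewrite -e; apply: Hr.
have hl : forall u, (u <= t')%N -> hray S (i - u%:Z) y.
  elim => [|u IH] Hu; first by rewrite subr0.
  have e : i - u.+1%:Z = i - u%:Z - 1 by lia.
  rewrite e; apply: hray_l; first by apply: IH; lia.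
  by rewrite -e; apply: Hl.
exists (i - t'%:Z), (i + t.+1%:Z); split; last by lia.
split; first lia.
- move=> k Hk; have [ik|ki] := lerP i k.
  + have := hr (absz (k - i)) ltac:(lia).
    by rewrite (_ : i + (absz (k - i))%:Z = k) //; lia.
  + have := hl (absz (i - k)) ltac:(lia).
    by rewrite (_ : i - (absz (i - k))%:Z = k) //; lia.
- by rewrite (_ : i - t'%:Z - 1 = i - t'.+1%:Z) -?negb_and //; lia.
- by rewrite -negb_and.
Qed.

Lemma vchord_ex S N x j : bnd S N -> vray S x j -> exists a b, vchord S a b x /\ a <= j < b.
Proof.
move=> HN Hj.
have bI : forall y, interior_v S x y -> (absz y < N)%N.
  by move=> y /andP [_ /HN []].
have [t [_ Hr Hrn]] : exists t, [/\ (t < N + absz j)%N, forall u, (u <= t)%N -> (fun u => interior_v S x (j + u%:Z)) u & ~~ (fun u => interior_v S x (j + u%:Z)) t.+1].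
  apply: (@find_last (fun u => interior_v S x (j + u%:Z))); [by rewrite addr0; exact: vray_int | by apply/negP => /bI; lia].
have [t' [_ Hl Hln]] : exists t, [/\ (t < N + absz j)%N, forall u, (u <= t)%N -> (fun u => interior_v S x (j - u%:Z)) u & ~~ (fun u => interior_v S x (j - u%:Z)) t.+1].
  apply: (@find_last (fun u => interior_v S x (j - u%:Z))); [by rewrite subr0; exact: vray_int | by apply/negP => /bI; lia].
have hr : forall u, (u <= t)%N -> vray S x (j + u%:Z).
  elim => [|u IH] Hu; first by rewrite addr0.
  have e : j + u.+1%:Z = j + u%:Z + 1 by lia.
  rewrite e; apply: vray_u; first by apply: IH; lia.
  by rewrite -e; apply: Hr.
have hl : forall u, (u <= t')%N -> vray S x (j - u%:Z).
  elim => [|u IH] Hu; first by rewrite subr0.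
  have e : j - u.+1%:Z = j - u%:Z - 1 by lia.
  rewrite e; apply: vray_d; first by apply: IH; lia.
  by rewrite -e; apply: Hl.
exists (j - t'%:Z), (j + t.+1%:Z); split; last by lia.
split; first lia.
- move=> k Hk; have [ik|ki] := lerP j k.
  + have := hr (absz (k - j)) ltac:(lia).
    by rewrite (_ : j + (absz (k - j))%:Z = k) //; lia.
  + have := hl (absz (j - k)) ltac:(lia).
    by rewrite (_ : j - (absz (j - k))%:Z = k) //; lia.
- by rewrite (_ : j - t'%:Z - 1 = j - t'.+1%:Z) -?negb_and //; lia.
- by rewrite -negb_and.
Qed.

Lemma hseg_ud i j : (hseg (i,j-1) (i,j) = Some (i,j)) * (hseg (i,j) (i,j-1) = Some (i,j)) *
  (vseg (i,j-1) (i,j) = None) * (vseg (i,j) (i,j-1) = None).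
Proof. rewrite /hseg /vseg /=; repeat split; bsplit => //=; try lia; congr Some; congr pair; lia. Qed.

Lemma vseg_lr i j : (vseg (i-1,j) (i,j) = Some (i,j)) * (vseg (i,j) (i-1,j) = Some (i,j)) *
  (hseg (i-1,j) (i,j) = None) * (hseg (i,j) (i-1,j) = None).
Proof. rewrite /hseg /vseg /=; repeat split; bsplit => //=; try lia; congr Some; congr pair; lia. Qed.

Lemma hcr_bord S c d x y : inP S c -> inP S d -> bordH S x y -> hcr x y c d = false.
Proof.
move=> Sc Sd B; apply/negbTE/negP => /(hcr_inS Sc Sd) /andP [h1 h2].
by move: B; rewrite /bordH h1 h2.
Qed.

Lemma vcr_bord S c d x y : inP S c -> inP S d -> bordV S x y -> vcr x y c d = false.
Proof.
move=> Sc Sd B; apply/negbTE/negP => /(vcr_inS Sc Sd) /andP [h1 h2].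
by move: B; rewrite /bordV h1 h2.
Qed.

Lemma gwalk_trans R c d e : gwalk R c d -> gwalk R d e -> gwalk R c e.
Proof. elim => // {c d} c d d' Rcd _ IH /IH; exact: gw_step. Qed.

Lemma gwalk_snoc R c d e : gwalk R c d -> R d e -> gwalk R c e.
Proof. move=> H1 H2; apply: (gwalk_trans H1); apply: gw_step H2 (gw_refl _ _). Qed.

Lemma gwalk_rev R c d : (forall a b, R a b -> R b a) -> gwalk R c d -> gwalk R d c.
Proof.
move=> Rs; elim => {c d} [c|c d e Rcd _ IH]; first exact: gw_refl.
by apply: gwalk_snoc IH (Rs _ _ Rcd).
Qed.

Lemma gwalk_mono (R R' : cell -> cell -> Prop) c d :
  (forall a b, R a b -> R' a b) -> gwalk R c d -> gwalk R' c d.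
Proof. move=> H; elim => {c d} [c|c d e Rcd _ IH]; [exact: gw_refl | exact: gw_step (H _ _ Rcd) IH]. Qed.

Lemma join_sym S c d : join S c d -> join S d c.
Proof.
case: c d => [c1 c2] [d1 d2] [Sc Sd]; rewrite /=.
case => [[E1 E2 nH]|[E1 E2 nH]|[E1 E2 nH]|[E1 E2 nH]]; subst; split => //.
- by constructor 2.
- by constructor 1.
- by constructor 4.
- by constructor 3.
Qed.

Lemma join_edge S c d : join S c d -> [/\ inP S c, inP S d & edge_adj c d].
Proof.
case: c d => [c1 c2] [d1 d2] [Sc Sd]; rewrite /edge_adj /=.
by case => [[E1 E2 _]|[E1 E2 _]|[E1 E2 _]|[E1 E2 _]]; subst; split => //; rewrite !eqxx ?orbT.
Qed.

Lemma join_noh S c d x y : join S c d -> hray S x y -> ~~ hcr x y c d.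
Proof.
move=> J Hr; apply/negP; rewrite /hcr => /eqP /hseg_cells [[E1 E2]|[E1 E2]]; subst;
case: J => _ _ /=; case => [[E1 E2 nH]|[E1 E2 nH]|[E1 E2 nH]|[E1 E2 nH]] //; try lia.
Qed.

Lemma join_nov S c d x y : join S c d -> vray S x y -> ~~ vcr x y c d.
Proof.
move=> J Hr; apply/negP; rewrite /vcr => /eqP /vseg_cells [[E1 E2]|[E1 E2]]; subst;
case: J => _ _ /=; case => [[E1 E2 nH]|[E1 E2 nH]|[E1 E2 nH]|[E1 E2 nH]] //; try lia.
Qed.

Lemma join_walk_in S c d : gwalk (join S) c d -> inP S c -> inP S d.
Proof. elim => // {c d} c d e J _ IH _; apply: IH; by case: (join_edge J). Qed.

Lemma sp_refl S c : inP S c -> same_pixel S c c.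
Proof. by move=> H; split => //; exact: gw_refl. Qed.

Lemma sp_sym S c d : same_pixel S c d -> same_pixel S d c.
Proof.
move=> [Sc W]; split; first exact: join_walk_in W Sc.
by apply: gwalk_rev W => a b; exact: join_sym.
Qed.

Lemma sp_trans S c d e : same_pixel S c d -> same_pixel S d e -> same_pixel S c e.
Proof. by move=> [Sc W1] [_ W2]; split => //; exact: gwalk_trans W1 W2. Qed.

Definition HbL (S : region) a b y := fun x y' => (y' = y /\ a <= x < b) \/ bordH S x y'.
Definition VbM (S : region) a b x := fun x' y' => (x' = x /\ a <= y' < b) \/ bordV S x' y'.
Definition stepL (S : region) a b y c d :=
  [/\ inP S c, inP S d, edge_adj c d & forall k, a <= k < b -> ~~ hcr k y c d].
Definition stepM (S : region) a b x c d :=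
  [/\ inP S c, inP S d, edge_adj c d & forall k, a <= k < b -> ~~ vcr x k c d].

Lemma inb_of S N c : bnd S N -> inP S c -> inb N c.
Proof. by move=> HN /HN [h1 h2]; rewrite /inb h1 h2. Qed.

Lemma walkL_Inv S N a b y c e : bnd S N -> gwalk (stepL S a b y) c e ->
  Inv N (HbL S a b y) (bordV S) (fun _ _ => false) (fun _ _ => false) c e.
Proof.
move=> HN; apply: Inv_walk => c' d' [Sc Sd E Nk]; split => //; try exact: inb_of HN _.
- by move=> x y' [[-> Hx]|B]; [exact: Nk | by rewrite (hcr_bord Sc Sd B)].
- by move=> x y' B; rewrite (vcr_bord Sc Sd B).
Qed.

Lemma walkM_Inv S N a b x c e : bnd S N -> gwalk (stepM S a b x) c e ->
  Inv N (bordH S) (VbM S a b x) (fun _ _ => false) (fun _ _ => false) c e.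
Proof.
move=> HN; apply: Inv_walk => c' d' [Sc Sd E Nk]; split => //; try exact: inb_of HN _.
- by move=> x' y' B; rewrite (hcr_bord Sc Sd B).
- by move=> x' y' [[-> Hx]|B]; [exact: Nk | by rewrite (vcr_bord Sc Sd B)].
Qed.

Lemma join_stepL S a b y c d : hchord S a b y -> join S c d -> stepL S a b y c d.
Proof.
move=> [_ Hr _ _] J; case: (join_edge J) => Sc Sd E; split => // k Hk.
exact: join_noh J (Hr _ Hk).
Qed.

Lemma join_stepM S a b x c d : vchord S a b x -> join S c d -> stepM S a b x c d.
Proof.
move=> [_ Hr _ _] J; case: (join_edge J) => Sc Sd E; split => // k Hk.
exact: join_nov J (Hr _ Hk).
Qed.

Lemma edge_h i j : edge_adj (i-1, j) (i, j).
Proof. by rewrite /edge_adj /= subrK !eqxx /= ?orbT. Qed.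
Lemma edge_v i j : edge_adj (i, j-1) (i, j).
Proof. by rewrite /edge_adj /= subrK !eqxx /= ?orbT. Qed.





Lemma no_vcut S N a b y x : bnd S N -> no_holes S -> thin S -> hchord S a b y ->
  a < x < b -> ~ vray S x y.
Proof.
move=> HN NH TH ch Hx V.
have ch' := ch; case: ch' => [ab Hr Ea Eb].
have /andP [s1 s2] := hray_int (Hr (x-1) ltac:(lia)).
have /andP [s3 s4] := hray_int (Hr x ltac:(lia)).
have [a' [b' [chv Hy]]] := vchord_ex HN V.
have chv' := chv; case: chv' => [ab' Hv Ea' Eb'].
have I := inb_of HN.
have PC : pixel_corner S (x,y) x y.
  exists (x,y); first by rewrite /around !inE eqxx ?orbT.
  split; first exact: sp_refl.
  move=> d'; rewrite /around !inE => Hd' nd' [_ Wk].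
  case/or4P: Hd' => /eqP E; subst d'.
  - have I0 := walkL_Inv HN (gwalk_mono (fun c d => @join_stepL S a b y c d ch) Wk).
    have I1 := Inv_step (edge_h x y) (I (x-1,y) s2) (I (x,y) s4) I0.
    have I2 := Inv_step (edge_v (x-1) y) (I (x-1,y-1) s1) (I (x-1,y) s2) I1.
    apply: (Contra_h NH (k0 := x-1) _ Ea Eb I2).
    + clear -Hx; lia.
    + move=> x'' Hx''; rewrite /hcr (vseg_lr x y) (hseg_ud (x-1) y) /= eqSome xpair_eqE eqxx andbT.
      by rewrite eq_sym.
    + move=> x'' y'' B; by rewrite !(hcr_bord _ _ B).
    + move=> x'' y'' B; by rewrite !(vcr_bord _ _ B).
  - have I0 := walkL_Inv HN (gwalk_mono (fun c d => @join_stepL S a b y c d ch) Wk).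
    have I1 := Inv_step (edge_v x y) (I (x,y-1) s3) (I (x,y) s4) I0.
    apply: (Contra_h NH (k0 := x) _ Ea Eb I1).
    + clear -Hx; lia.
    + move=> x'' Hx''; rewrite /hcr (hseg_ud x y) /= eqSome xpair_eqE eqxx andbT.
      by rewrite eq_sym.
    + move=> x'' y'' B; by rewrite !(hcr_bord _ _ B).
    + move=> x'' y'' B; by rewrite !(vcr_bord _ _ B).
  - have I0 := walkM_Inv HN (gwalk_mono (fun c d => @join_stepM S a' b' x c d chv) Wk).
    have I1 := Inv_step (edge_h x y) (I (x-1,y) s2) (I (x,y) s4) I0.
    apply: (Contra_v NH (k0 := y) Hy Ea' Eb' I1).
    + move=> y'' Hy''; rewrite /vcr (vseg_lr x y) /= eqSome xpair_eqE eqxx /=.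
      by rewrite eq_sym.
    + move=> x'' y'' B; by rewrite !(hcr_bord _ _ B).
    + move=> x'' y'' B; by rewrite !(vcr_bord _ _ B).
  - by rewrite eqxx in nd'.
have := TH (x,y) x y s4 PC.
by rewrite /on_boundary /around /= /inP /= s1 s2 s3 s4.
Qed.

Lemma no_vcut' S N a b y x : bnd S N -> no_holes S -> thin S -> hchord S a b y ->
  a < x < b -> ~ vray S x (y-1).
Proof.
move=> HN NH TH ch Hx V.
have ch' := ch; case: ch' => [ab Hr Ea Eb].
have /andP [s1 s2] := hray_int (Hr (x-1) ltac:(lia)).
have /andP [s3 s4] := hray_int (Hr x ltac:(lia)).
apply: (no_vcut HN NH TH ch Hx).
have := vray_u V; rewrite subrK; apply; by rewrite /interior_v s2 s4.
Qed.

Lemma chord_rows S N a b y : bnd S N -> no_holes S -> thin S -> hchord S a b y ->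
  forall k k', a <= k < b -> a <= k' < b ->
  same_pixel S (k,y) (k',y) /\ same_pixel S (k,y-1) (k',y-1).
Proof.
move=> HN NH TH ch.
have ch' := ch; case: ch' => [ab Hr Ea Eb].
have key : forall t : nat, a + t%:Z < b ->
    same_pixel S (a,y) (a + t%:Z,y) /\ same_pixel S (a,y-1) (a + t%:Z,y-1).
  elim => [|t IH] Ht.
  - have /andP [h1 h2] := hray_int (Hr a ltac:(lia)).
    by rewrite addr0; split; apply: sp_refl.
  - have e : a + t.+1%:Z = a + t%:Z + 1 by lia.
    have [IH1 IH2] := IH ltac:(lia).
    have /andP [h1 h2] := hray_int (Hr (a + t%:Z) ltac:(lia)).
    have /andP [h3 h4] := hray_int (Hr (a + t.+1%:Z) ltac:(lia)).
    have nv1 := no_vcut HN NH TH ch (x := a + t.+1%:Z) ltac:(lia).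
    have nv2 := no_vcut' HN NH TH ch (x := a + t.+1%:Z) ltac:(lia).
    rewrite e in h3 h4 nv1 nv2 *.
    split.
    + apply: (sp_trans IH1); split => //; apply: gw_step (gw_refl _ _).
      by split => //; constructor 3.
    + apply: (sp_trans IH2); split => //; apply: gw_step (gw_refl _ _).
      by split => //; constructor 3.
move=> k k' Hk Hk'.
have [A1 A2] := key (absz (k - a)) ltac:(lia).
have [B1 B2] := key (absz (k' - a)) ltac:(lia).
rewrite (_ : a + (absz (k - a))%:Z = k) in A1 A2; last by lia.
rewrite (_ : a + (absz (k' - a))%:Z = k') in B1 B2; last by lia.
by split; [apply: sp_trans (sp_sym A1) B1 | apply: sp_trans (sp_sym A2) B2].
Qed.

Lemma edge_h' i j : edge_adj (i, j) (i-1, j).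
Proof. by rewrite /edge_adj /= subrK !eqxx /= ?orbT. Qed.
Lemma edge_v' i j : edge_adj (i, j) (i, j-1).
Proof. by rewrite /edge_adj /= subrK !eqxx /= ?orbT. Qed.

Lemma Sep_h S N a b y k0 : bnd S N -> no_holes S -> hchord S a b y -> a <= k0 < b ->
  gwalk (stepL S a b y) (k0, y-1) (k0, y) -> False.
Proof.
move=> HN NH ch Hk W.
have ch' := ch; case: ch' => [ab Hr Ea Eb].
have /andP [s1 s2] := hray_int (Hr k0 Hk).
have I := inb_of HN.
have I0 := walkL_Inv HN W.
have I1 := Inv_step (edge_v' k0 y) (I (k0,y) s2) (I (k0,y-1) s1) I0.
apply: (Contra_h NH Hk Ea Eb I1).
- move=> x'' Hx''; rewrite /hcr (hseg_ud k0 y) /= eqSome xpair_eqE eqxx andbT.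
  by rewrite eq_sym.
- move=> x'' y'' B; by rewrite !(hcr_bord _ _ B).
- move=> x'' y'' B; by rewrite !(vcr_bord _ _ B).
Qed.

Lemma Sep_h' S N a b y k0 : bnd S N -> no_holes S -> hchord S a b y -> a <= k0 < b ->
  gwalk (stepL S a b y) (k0, y) (k0, y-1) -> False.
Proof.
move=> HN NH ch Hk W.
have ch' := ch; case: ch' => [ab Hr Ea Eb].
have /andP [s1 s2] := hray_int (Hr k0 Hk).
have I := inb_of HN.
have I0 := walkL_Inv HN W.
have I1 := Inv_step (edge_v k0 y) (I (k0,y-1) s1) (I (k0,y) s2) I0.
apply: (Contra_h NH Hk Ea Eb I1).
- move=> x'' Hx''; rewrite /hcr (hseg_ud k0 y) /= eqSome xpair_eqE eqxx andbT.
  by rewrite eq_sym.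
- move=> x'' y'' B; by rewrite !(hcr_bord _ _ B).
- move=> x'' y'' B; by rewrite !(vcr_bord _ _ B).
Qed.



Lemma idx_eq S (s : seq cell) i j :
  (forall i j, (i < size s)%N -> (j < size s)%N -> i <> j ->
     ~ same_pixel S (nth (0, 0) s i) (nth (0, 0) s j)) ->
  (i < size s)%N -> (j < size s)%N -> same_pixel S (nth (0, 0) s i) (nth (0, 0) s j) -> i = j.
Proof. move=> D Hi Hj P; case: (eqVneq i j) => // /eqP nij; by case: (D _ _ Hi Hj nij). Qed.

Lemma main_h S N (s : seq cell) x0 y : bnd S N -> no_holes S -> thin S ->
  (3 <= size s)%N ->
  (forall i j, (i < size s)%N -> (j < size s)%N -> i <> j ->
     ~ same_pixel S (nth (0, 0) s i) (nth (0, 0) s j)) ->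
  (forall i, (i < size s)%N ->
     pixel_adj S (nth (0, 0) s i) (nth (0, 0) s (i.+1 %% size s))) ->
  hray S x0 y ->
  (same_pixel S (nth (0, 0) s 0) (x0,y) /\ same_pixel S (nth (0, 0) s 1) (x0,y-1)) \/
  (same_pixel S (nth (0, 0) s 0) (x0,y-1) /\ same_pixel S (nth (0, 0) s 1) (x0,y)) -> False.
Proof.
move=> HN NH TH n3 D A Hray Hor.
set n := size s in n3 D A.
pose sk k := nth (0, 0) s k.
have [a [b [ch Hab]]] := hchord_ex HN Hray.
have rows := chord_rows HN NH TH ch.
have [iu [il [Hu Hl Hui]]] : exists iu il, [/\ same_pixel S (sk iu) (x0,y),
    same_pixel S (sk il) (x0,y-1) & (iu = 0%N /\ il = 1%N \/ iu = 1%N /\ il = 0%N)].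
  case: Hor => [[h1 h2]|[h1 h2]]; [exists 0%N, 1%N | exists 1%N, 0%N]; split => //; by [left|right].
have Cross : forall e f, inP S e -> inP S f -> edge_adj e f -> ~ stepL S a b y e f ->
    (same_pixel S e (sk iu) /\ same_pixel S f (sk il)) \/
    (same_pixel S e (sk il) /\ same_pixel S f (sk iu)).
  move=> e f Se Sf E nst; apply: NNPP => Hn; apply: nst; split => // k Hk.
  apply/negP => /eqP /hseg_cells [[E1 E2]|[E1 E2]]; apply: Hn; subst.
  - have [r1 r2] := rows k x0 Hk Hab.
    by right; split; [apply: sp_trans r2 (sp_sym Hl) | apply: sp_trans r1 (sp_sym Hu)].
  - have [r1 r2] := rows k x0 Hk Hab.
    by left; split; [apply: sp_trans r1 (sp_sym Hu) | apply: sp_trans r2 (sp_sym Hl)].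
have toL : forall c d, same_pixel S c d -> gwalk (stepL S a b y) c d.
  move=> c d [_ W]; apply: gwalk_mono W => c' d'; exact: join_stepL.
have step : forall k, (1 <= k < n)%N -> gwalk (stepL S a b y) (sk k) (sk (k.+1 %% n)%N).
  move=> k Hk.
  have [nsp [e [f [Pe Pf E]]]] := A k ltac:(lia).
  have Se : inP S e by case: (sp_sym Pe).
  have Sf : inP S f by case: (sp_sym Pf).
  apply: gwalk_trans (toL _ _ Pe) _.
  apply: gw_step (toL _ _ (sp_sym Pf)).
  apply: NNPP => nst.
  have Hk1 : (k.+1 %% n < n)%N by apply: ltn_pmod; lia.
  case: (Cross e f Se Sf E nst) => [[C1 C2]|[C1 C2]].
  + have e1 := idx_eq D (i := k) (j := iu) ltac:(lia) ltac:(case: Hui; lia) (sp_trans Pe C1).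
    have e2 := idx_eq D (i := k.+1 %% n) (j := il) Hk1 ltac:(case: Hui; lia) (sp_trans Pf C2).
    case: Hui => [[h1 h2]|[h1 h2]]; rewrite h1 h2 in e1 e2.
    * clear -e1 Hk; lia.
    * by move: e2; rewrite e1 modn_small.
  + have e1 := idx_eq D (i := k) (j := il) ltac:(lia) ltac:(case: Hui; lia) (sp_trans Pe C1).
    have e2 := idx_eq D (i := k.+1 %% n) (j := iu) Hk1 ltac:(case: Hui; lia) (sp_trans Pf C2).
    case: Hui => [[h1 h2]|[h1 h2]]; rewrite h1 h2 in e1 e2.
    * by move: e2; rewrite e1 modn_small.
    * clear -e1 Hk; lia.
have claim : forall k, (1 <= k < n)%N -> gwalk (stepL S a b y) (sk 1%N) (sk k).
  elim => [|k IH] Hk; first by lia.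
  have [->|k0] := eqVneq k 0%N; first exact: gw_refl.
  apply: gwalk_trans (IH ltac:(lia)) _.
  have := step k ltac:(lia); rewrite modn_small //; lia.
have W10 : gwalk (stepL S a b y) (sk 1%N) (sk 0%N).
  apply: gwalk_trans (claim n.-1 ltac:(lia)) _.
  have := step n.-1 ltac:(lia); rewrite prednK ?modnn //; lia.
case: Hui => [[h1 h2]|[h1 h2]]; subst.
- apply: (Sep_h HN NH ch Hab).
  apply: gwalk_trans (toL _ _ (sp_sym Hl)) _; apply: gwalk_trans W10 _; exact: toL.
- apply: (Sep_h' HN NH ch Hab).
  apply: gwalk_trans (toL _ _ (sp_sym Hu)) _; apply: gwalk_trans W10 _; exact: toL.
Qed.



Definition swap (c : cell) : cell := (c.2, c.1).
Definition tr (S : region) : region := fun i j => S j i.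

Lemma swapK c : swap (swap c) = c. Proof. by case: c. Qed.
Lemma inP_T S c : inP (tr S) (swap c) = inP S c. Proof. by []. Qed.
Lemma edge_T c d : edge_adj (swap c) (swap d) = edge_adj c d.
Proof. by rewrite /edge_adj /= orbC. Qed.

Lemma reflex_T S x y : reflex (tr S) x y = reflex S y x.
Proof.
rewrite /reflex /around /inP /tr /=.
by case: (S (y-1) (x-1)); case: (S (y-1) x); case: (S y (x-1)); case: (S y x).
Qed.

Lemma hray_T S i y : hray (tr S) i y <-> vray S y i.
Proof.
rewrite /hray /vray; split.
- case => [[x [R M H1 H2]]|[x [R M H1 H2]]]; [left|right]; exists x; split => //;
  by rewrite -reflex_T.
- case => [[x [R M H1 H2]]|[x [R M H1 H2]]]; [left|right]; exists x; split => //;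
  by rewrite reflex_T.
Qed.

Lemma vray_T S x j : vray (tr S) x j <-> hray S j x.
Proof.
rewrite /hray /vray; split.
- case => [[y [R M H1 H2]]|[y [R M H1 H2]]]; [left|right]; exists y; split => //;
  by rewrite -reflex_T.
- case => [[y [R M H1 H2]]|[y [R M H1 H2]]]; [left|right]; exists y; split => //;
  by rewrite reflex_T.
Qed.

Lemma join_T S c d : join S c d -> join (tr S) (swap c) (swap d).
Proof.
case: c d => [c1 c2] [d1 d2] [Sc Sd]; rewrite /=.
case => [[E1 E2 nH]|[E1 E2 nH]|[E1 E2 nH]|[E1 E2 nH]]; split => //.
- by constructor 3; split => //; rewrite vray_T.
- by constructor 4; split => //; rewrite vray_T.
- by constructor 1; split => //; rewrite hray_T.
- by constructor 2; split => //; rewrite hray_T.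
Qed.

Lemma gwalk_map (f : cell -> cell) (R R' : cell -> cell -> Prop) c d :
  (forall a b, R a b -> R' (f a) (f b)) -> gwalk R c d -> gwalk R' (f c) (f d).
Proof. move=> H; elim => {c d} [c|c d e Rcd _ IH]; [exact: gw_refl | exact: gw_step (H _ _ Rcd) IH]. Qed.

Lemma sp_T S c d : same_pixel S c d -> same_pixel (tr S) (swap c) (swap d).
Proof. move=> [Sc W]; split => //; apply: gwalk_map W => a b; exact: join_T. Qed.

Lemma trK S : tr (tr S) = S. Proof. by []. Qed.

Lemma sp_T' S c d : same_pixel (tr S) (swap c) (swap d) -> same_pixel S c d.
Proof. by move/sp_T; rewrite !swapK. Qed.

Lemma padj_T S c d : pixel_adj S c d -> pixel_adj (tr S) (swap c) (swap d).
Proof.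
move=> [nsp [c' [d' [P1 P2 E]]]]; split; first by move/sp_T'.
exists (swap c'), (swap d'); split; try exact: sp_T.
by rewrite edge_T.
Qed.

Lemma bnd_T S N : bnd S N -> bnd (tr S) N.
Proof. by move=> H i j /H [h1 h2]. Qed.

Lemma nh_T S : no_holes S -> no_holes (tr S).
Proof.
move=> NH c nc M.
have [d [Hd W]] := NH (swap c) nc M.
exists (swap d); split; first by case: Hd; [right|left].
rewrite -[c]swapK; apply: gwalk_map W => a b /and3P [na nb E].
by rewrite /= edge_T na nb E.
Qed.

Lemma around_T d x y : (swap d \in around y x) = (d \in around x y).
Proof.
case: d => d1 d2; rewrite /around !inE /= !xpair_eqE.
by case: (d1 == x-1); case: (d1 == x); case: (d2 == y-1); case: (d2 == y).
Qed.

Lemma thin_T S : thin S -> thin (tr S).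
Proof.
move=> TH c x y Sc [d Hd [Pd Hn]].
have : on_boundary S y x.
  apply: (TH (swap c)); first by [].
  exists (swap d); first by rewrite around_T.
  split; first exact: (sp_T Pd).
  move=> d'' Hd'' nd'' P; apply: (Hn (swap d'')).
  - by rewrite -around_T swapK.
  - by apply: contra nd'' => /eqP <-; rewrite swapK.
  - by have := sp_T P; rewrite swapK.
rewrite /on_boundary /around /inP /tr /=.
by case: (S (y-1) (x-1)); case: (S (y-1) x); case: (S y (x-1)); case: (S y x).
Qed.



Lemma main_v S N (s : seq cell) x0 y : bnd S N -> no_holes S -> thin S ->
  (3 <= size s)%N ->
  (forall i j, (i < size s)%N -> (j < size s)%N -> i <> j ->
     ~ same_pixel S (nth (0, 0) s i) (nth (0, 0) s j)) ->
  (forall i, (i < size s)%N ->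
     pixel_adj S (nth (0, 0) s i) (nth (0, 0) s (i.+1 %% size s))) ->
  vray S y x0 ->
  (same_pixel S (nth (0, 0) s 0) (y,x0) /\ same_pixel S (nth (0, 0) s 1) (y-1,x0)) \/
  (same_pixel S (nth (0, 0) s 0) (y-1,x0) /\ same_pixel S (nth (0, 0) s 1) (y,x0)) -> False.
Proof.
move=> HN NH TH n3 D A V Hor.
have nthT : forall k, (k < size s)%N -> nth (0,0) (map swap s) k = swap (nth (0,0) s k).
  by move=> k Hk; rewrite (nth_map (0,0)).
apply: (@main_h (tr S) N (map swap s) x0 y (bnd_T HN) (nh_T NH) (thin_T TH)).
- by rewrite size_map.
- rewrite size_map => i j Hi Hj nij; rewrite !nthT // => /sp_T'; exact: D.
- rewrite size_map => i Hi; rewrite !nthT //; last by apply: ltn_pmod; lia.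
  exact: padj_T (A i Hi).
- by rewrite hray_T.
- have h0 : (0 < size s)%N by lia.
  have h1 : (1 < size s)%N by lia.
  rewrite !nthT //.
  case: Hor => [[P0 P1]|[P0 P1]]; [left|right]; split.
  + exact: (sp_T P0).
  + exact: (sp_T P1).
  + exact: (sp_T P0).
  + exact: (sp_T P1).
Qed.

Unset Implicit Arguments.

Theorem lemma5 (S : region) :
  orthogonal_polygon S -> thin S -> no_holes S -> dual_is_tree S.
Proof.
move=> [[N HN] _ CC _] TH NH; split.
- move=> c d Sc Sd; have W := CC c d Sc Sd.
  apply: gwalk_mono W => a b /and3P [Sa Sb E].
  case: (classic (same_pixel S a b)) => [h|h]; [by left | right].
  split => //; exists a, b; split => //; exact: sp_refl.
- move=> [s [n3 D A]].
  have [nsp [c' [d' [P0 P1 E]]]] := A 0%N ltac:(lia).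
  rewrite (@modn_small 1) in P1; last by lia.
  have Sc' : inP S c' by case: (sp_sym P0).
  have Sd' : inP S d' by case: (sp_sym P1).
  have nJ : ~ join S c' d'.
    move=> J.
    have P01 : same_pixel S (nth (0,0) s 0) (nth (0,0) s 1).
      apply: (sp_trans P0); apply: (sp_trans (conj Sc' (gw_step J (gw_refl _ _)))).
      exact: sp_sym P1.
    by have := idx_eq D (i := 0%N) (j := 1%N) ltac:(lia) ltac:(lia) P01.
  have HN' : bnd S N by [].
  case/edge_shape: E Sc' Sd' nJ P0 P1 => i [j [[-> ->]|[-> ->]|[-> ->]|[-> ->]]] Sc' Sd' nJ P0 P1.
  + have Hr : hray S i (j+1).
      by apply: NNPP => nh; apply: nJ; split => //; constructor 1.
    apply: (main_h HN' NH TH n3 D A Hr); right; rewrite addrK; by split.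
  + have Hr : hray S i (j+1).
      by apply: NNPP => nh; apply: nJ; split => //; constructor 2.
    apply: (main_h HN' NH TH n3 D A Hr); left; rewrite addrK; by split.
  + have Hr : vray S (i+1) j.
      by apply: NNPP => nh; apply: nJ; split => //; constructor 3.
    apply: (main_v HN' NH TH n3 D A Hr); right; rewrite addrK; by split.
  + have Hr : vray S (i+1) j.
      by apply: NNPP => nh; apply: nJ; split => //; constructor 4.
    apply: (main_v HN' NH TH n3 D A Hr); left; rewrite addrK; by split.
Qed.
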